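(* Let $D\subset\mathbb{R}^3$ be a domain such that for every isometry $A$ of $\mathbb{R}^3$ the semitube domain $S_{A(D)}\subset\mathbb{C}^2$ is pseudoconvex. Then $D$ is convex.
   Context: Identify $\mathbb{R}^3$ with $\mathbb{C}\times\mathbb{R}$. For a set $B\subset\mathbb{R}^3$, the semitube set with base $B$ is $S_B:=\{(z_1,z_2)\in\mathbb{C}^2:(z_1,\operatorname{Re} z_2)\in B\}$, i.e. $S_B=B\times\mathbb{R}$ (the last factor being $\operatorname{Im} z_2$). When $B$ is a domain, $S_B$ is called a semitube domain. *)

(* Defs.v *)
From HB Require Import structures.
From mathcomp Require Import all_boot all_order all_algebra.
From mathcomp Require Import all_classical all_reals all_analysis.
Set Implicit Arguments. Unset Strict Implicit. Unset Printing Implicit Defensive.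
Import Order.TTheory GRing.Theory Num.Theory.
Import numFieldNormedType.Exports.
Local Open Scope classical_set_scope.
Local Open Scope ring_scope.

Section Defs.
Variable R : realType.

(* R^3 = C x R : a point p = ((Re z1, Im z1), Re z2) *)
Definition R3 := ((R * R) * R)%type.
(* C^2 : a point z = ((Re z1, Im z1), (Re z2, Im z2)) *)
Definition C2 := ((R * R) * (R * R))%type.

Definition dist3 (p q : R3) : R :=
  Num.sqrt ((p.1.1 - q.1.1) ^+ 2 + (p.1.2 - q.1.2) ^+ 2 + (p.2 - q.2) ^+ 2).

Definition dist4 (z w : C2) : R :=
  Num.sqrt ((z.1.1 - w.1.1) ^+ 2 + (z.1.2 - w.1.2) ^+ 2
          + (z.2.1 - w.2.1) ^+ 2 + (z.2.2 - w.2.2) ^+ 2).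

Definition isometry3 (A : R3 -> R3) : Prop :=
  forall p q, dist3 (A p) (A q) = dist3 p q.

Definition domain3 (D : set R3) : Prop := D !=set0 /\ open D /\ connected D.

Definition semitube (B : set R3) : set C2 :=
  [set z | B ((z.1.1, z.1.2), z.2.1)].

Definition convex3 (D : set R3) : Prop :=
  forall p q, D p -> D q -> forall t : R, 0 <= t <= 1 ->
    D (((1 - t) * p.1.1 + t * q.1.1, (1 - t) * p.1.2 + t * q.1.2),
        (1 - t) * p.2 + t * q.2).

(* complex multiplication by e^{it} on C, in real coordinates *)
Definition rotC (t : R) (w : R * R) : R * R :=
  (cos t * w.1 - sin t * w.2, sin t * w.1 + cos t * w.2).

(* the point a + e^{it} b of C^2 *)
Definition circ (a b : C2) (t : R) : C2 :=
  ((a.1.1 + (rotC t b.1).1, a.1.2 + (rotC t b.1).2),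
   (a.2.1 + (rotC t b.2).1, a.2.2 + (rotC t b.2).2)).

(* the point a + zeta b of C^2, zeta = (x, y) = x + i y *)
Definition cline (a b : C2) (zeta : R * R) : C2 :=
  ((a.1.1 + (zeta.1 * b.1.1 - zeta.2 * b.1.2), a.1.2 + (zeta.1 * b.1.2 + zeta.2 * b.1.1)),
   (a.2.1 + (zeta.1 * b.2.1 - zeta.2 * b.2.2), a.2.2 + (zeta.1 * b.2.2 + zeta.2 * b.2.1))).

(* plurisubharmonic (real-valued) function on the open set Om :
   upper semicontinuous, and sub-mean-value property on every closed
   complex disc {a + zeta b : |zeta| <= 1} contained in Om *)
Definition psh (Om : set C2) (u : C2 -> R) : Prop :=
  (forall z, Om z -> forall e : R, 0 < e -> \forall w \near z, u w < u z + e) /\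
  (forall a b : C2,
     (forall zeta : R * R, zeta.1 ^+ 2 + zeta.2 ^+ 2 <= 1 -> Om (cline a b zeta)) ->
     ((u a)%:E <= ((2 * pi)^-1)%:E *
        \int[lebesgue_measure]_(t in `[0%R, (2 * pi)%R]) (u (circ a b t))%:E)%E).

Definition bdist (Om : set C2) (z : C2) : R :=
  inf [set dist4 z w | w in ~` Om].

(* pseudoconvexity of an open set: -log dist(., boundary) is psh
   (with C^2 itself pseudoconvex) *)
Definition pseudoconvex (Om : set C2) : Prop :=
  open Om /\ (Om = setT \/ psh Om (fun z => - ln (bdist Om z))).

End Defs.

(* Main.v *)
Require Import Defs.
From HB Require Import structures.
From mathcomp Require Import all_boot all_order all_algebra.
From mathcomp Require Import all_classical all_reals all_analysis.
From mathcomp Require Import ring lra.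
Set Implicit Arguments. Unset Strict Implicit. Unset Printing Implicit Defensive.
Import Order.TTheory GRing.Theory Num.Theory.
Import numFieldNormedType.Exports.
Local Open Scope classical_set_scope.
Local Open Scope ring_scope.

Section Geo.
Variable R : realType.
Implicit Types p q r : R3 R.

Lemma sqrt_le_of (S T : R) : 0 <= T -> S <= T ^+ 2 -> Num.sqrt S <= T.
Proof.
move=> T0 ST; have := ler_wsqrtr ST; rewrite sqrtr_sqr ger0_norm //.
Qed.

Lemma le_sqrt_of (S T : R) : T ^+ 2 <= S -> T <= Num.sqrt S.
Proof.
move=> TS; have := ler_wsqrtr TS; rewrite sqrtr_sqr => h.
exact: le_trans (ler_norm T) h.
Qed.

Lemma dist3_ge0 p q : 0 <= dist3 p q.
Proof. exact: sqrtr_ge0. Qed.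

Lemma dist3C p q : dist3 p q = dist3 q p.
Proof. by rewrite /dist3; congr Num.sqrt; ring. Qed.

Lemma dist3xx p : dist3 p p = 0.
Proof. by rewrite /dist3 !subrr expr0n /= !addr0 sqrtr0. Qed.

Lemma dist3_tri p q r : dist3 p r <= dist3 p q + dist3 q r.
Proof.
rewrite /dist3.
set a1 := p.1.1 - q.1.1; set a2 := p.1.2 - q.1.2; set a3 := p.2 - q.2.
set b1 := q.1.1 - r.1.1; set b2 := q.1.2 - r.1.2; set b3 := q.2 - r.2.
have -> : p.1.1 - r.1.1 = a1 + b1 by rewrite /a1 /b1; ring.
have -> : p.1.2 - r.1.2 = a2 + b2 by rewrite /a2 /b2; ring.
have -> : p.2 - r.2 = a3 + b3 by rewrite /a3 /b3; ring.
set A := a1 ^+ 2 + a2 ^+ 2 + a3 ^+ 2; set B := b1 ^+ 2 + b2 ^+ 2 + b3 ^+ 2.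
have A0 : 0 <= A by rewrite /A !addr_ge0 // sqr_ge0.
have B0 : 0 <= B by rewrite /B !addr_ge0 // sqr_ge0.
apply: sqrt_le_of; first by rewrite addr_ge0 // sqrtr_ge0.
have dot : a1 * b1 + a2 * b2 + a3 * b3 <= Num.sqrt A * Num.sqrt B.
  rewrite -sqrtrM //; apply: le_sqrt_of; rewrite /A /B.
  have -> : (a1 ^+ 2 + a2 ^+ 2 + a3 ^+ 2) * (b1 ^+ 2 + b2 ^+ 2 + b3 ^+ 2) =
    (a1 * b1 + a2 * b2 + a3 * b3) ^+ 2 + ((a1 * b2 - a2 * b1) ^+ 2
     + (a1 * b3 - a3 * b1) ^+ 2 + (a2 * b3 - a3 * b2) ^+ 2) by ring.
  by rewrite lerDl !addr_ge0 // sqr_ge0.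
rewrite [X in _ <= X]sqrrD !sqr_sqrtr //.
have -> : (a1 + b1) ^+ 2 + (a2 + b2) ^+ 2 + (a3 + b3) ^+ 2 =
  A + B + 2 * (a1 * b1 + a2 * b2 + a3 * b3) by rewrite /A /B; ring.
rewrite -mulr_natl; lra.
Qed.

Lemma coord_le_dist3 p q :
  [/\ `|p.1.1 - q.1.1| <= dist3 p q, `|p.1.2 - q.1.2| <= dist3 p q
    & `|p.2 - q.2| <= dist3 p q].
Proof.
have h1 := sqr_ge0 (p.1.1 - q.1.1); have h2 := sqr_ge0 (p.1.2 - q.1.2).
have h3 := sqr_ge0 (p.2 - q.2).
rewrite /dist3; split; apply: le_sqrt_of; rewrite real_normK ?num_real //; lra.
Qed.

Lemma dist3_le_sum p q :
  dist3 p q <= `|p.1.1 - q.1.1| + `|p.1.2 - q.1.2| + `|p.2 - q.2|.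
Proof.
rewrite /dist3; apply: sqrt_le_of; first by rewrite !addr_ge0.
rewrite -[(p.1.1 - q.1.1) ^+ 2]real_normK ?num_real //.
rewrite -[(p.1.2 - q.1.2) ^+ 2]real_normK ?num_real //.
rewrite -[(p.2 - q.2) ^+ 2]real_normK ?num_real //.
have := normr_ge0 (p.1.1 - q.1.1); have := normr_ge0 (p.1.2 - q.1.2);
have := normr_ge0 (p.2 - q.2); nra.
Qed.

End Geo.

Section Dist.
Variable R : realType.
Implicit Types p q r : R3 R.

Lemma nbhs3P p (B : set (R3 R)) :
  nbhs p B <-> exists2 e : R, 0 < e & forall q, dist3 p q < e -> B q.
Proof.
split.
  move=> /nbhs_ballP [e e0 sB]; exists e => // q pq; apply: sB.
  have [h1 h2 h3] := coord_le_dist3 p q.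
  split; [split|]; rewrite /ball /= -?ball_normE /ball_ /=.
  - exact: le_lt_trans h1 pq.
  - exact: le_lt_trans h2 pq.
  - exact: le_lt_trans h3 pq.
move=> [e e0 sB]; apply/nbhs_ballP; exists (e / 3); first by rewrite /= divr_gt0.
move=> q [[h1 h2] h3]; move: h1 h2 h3; rewrite /ball /= -?ball_normE /ball_ /= => h1 h2 h3.
apply: sB; have := dist3_le_sum p q; lra.
Qed.


Definition dR (D : set (R3 R)) p := inf [set dist3 p q | q in ~` D].

Lemma dR_lbound D p : has_lbound [set dist3 p q | q in ~` D].
Proof. by exists 0 => _ [q _ <-]; exact: dist3_ge0. Qed.

Lemma dR_le D p q : ~ D q -> dR D p <= dist3 p q.
Proof. by move=> Dq; apply: ge_inf; [exact: dR_lbound | exists q]. Qed.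

Lemma dR_empty D p : (forall q, D q) -> dR D p = 0.
Proof.
move=> DT; rewrite /dR; have -> : [set dist3 p q | q in ~` D] = set0.
  by apply/seteqP; split => // _ [q /= nq _]; exfalso; exact: nq.
exact: inf0.
Qed.

Lemma dR_lb D p e : (exists q, ~ D q) ->
  (forall q, ~ D q -> e <= dist3 p q) -> e <= dR D p.
Proof.
move=> [q0 nq0] h; apply: lb_le_inf; first by exists (dist3 p q0), q0.
by move=> _ [q nq <-]; exact: h.
Qed.

Lemma dR_ge0 D p : 0 <= dR D p.
Proof.
have [[q nq]|] := pselect (exists q, ~ D q).
  by apply: dR_lb; [exists q | move=> *; exact: dist3_ge0].
move=> nex; rewrite dR_empty // => q; apply: contrapT => nq; apply: nex; by exists q.
Qed.

Lemma dR_in D p q : dist3 p q < dR D p -> D q.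
Proof.
move=> h; apply: contrapT => nq; have := dR_le p nq; lra.
Qed.

Lemma dR_lip D p q : dR D p <= dR D q + dist3 p q.
Proof.
have [[w nw]|nex] := pselect (exists q, ~ D q); last first.
  have DT : forall q, D q by move=> r; apply: contrapT => nr; apply: nex; exists r.
  rewrite !dR_empty //; rewrite add0r; exact: dist3_ge0.
rewrite -lerBlDr; apply: dR_lb; first by exists w.
move=> r nr; have := dR_le p nr; have := dist3_tri p q r; lra.
Qed.

Lemma dR_gt0 D p : open D -> D p -> (exists q, ~ D q) -> 0 < dR D p.
Proof.
move=> oD Dp ex; have : nbhs p D by exact: open_nbhs_nbhs.
move=> /nbhs3P [e e0 sD]; apply: lt_le_trans e0 _; apply: dR_lb => // q nq.
by rewrite leNgt; apply/negP => /sD.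
Qed.

End Dist.

Section Iso.
Variable R : realType.
Implicit Types p q r x y : R3 R.

Definition seg x y (t : R) : R3 R :=
  (((1 - t) * x.1.1 + t * y.1.1, (1 - t) * x.1.2 + t * y.1.2),
    (1 - t) * x.2 + t * y.2).

Definition sub3 z x : R3 R := ((z.1.1 - x.1.1, z.1.2 - x.1.2), z.2 - x.2).
Definition add3 z x : R3 R := ((z.1.1 + x.1.1, z.1.2 + x.1.2), z.2 + x.2).
Definition hh (u z : R3 R) : R3 R :=
  let k := 2 * (z.1.1 * u.1.1 + z.1.2 * u.1.2 + z.2 * u.2) /
           (u.1.1 ^+ 2 + u.1.2 ^+ 2 + u.2 ^+ 2) in
  ((z.1.1 - k * u.1.1, z.1.2 - k * u.1.2), z.2 - k * u.2).

Lemma hhK u z : u.1.1 ^+ 2 + u.1.2 ^+ 2 + u.2 ^+ 2 != 0 -> hh u (hh u z) = z.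
Proof.
move: u z => [[u1 u2] u3] [[z1 z2] z3] /= n0.
rewrite /hh /=; congr ((_, _), _); field; exact: n0.
Qed.

Lemma hh_dist u p q : u.1.1 ^+ 2 + u.1.2 ^+ 2 + u.2 ^+ 2 != 0 ->
  dist3 (hh u p) (hh u q) = dist3 p q.
Proof.
move: u p q => [[u1 u2] u3] [[p1 p2] p3] [[q1 q2] q3] /= n0.
rewrite /dist3 /hh /=; congr Num.sqrt; field; exact: n0.
Qed.

Lemma sub3_dist p q x : dist3 (sub3 p x) (sub3 q x) = dist3 p q.
Proof. by rewrite /dist3 /sub3 /=; congr Num.sqrt; ring. Qed.

Lemma sub3_add3 z x : sub3 (add3 z x) x = z.
Proof. by move: z => [[? ?] ?]; rewrite /sub3 /add3 /=; congr ((_, _), _); ring. Qed.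

Lemma add3_sub3 z x : add3 (sub3 z x) x = z.
Proof. by move: z => [[? ?] ?]; rewrite /sub3 /add3 /= !subrK. Qed.

Lemma iso_exists x y : exists A B : R3 R -> R3 R,
  [/\ isometry3 A, (forall q, A (B q) = q), (forall w, B (A w) = w) &
      forall t, A (seg x y t) = ((0, 0), t * dist3 x y)].
Proof.
set a := y.1.1 - x.1.1; set b := y.1.2 - x.1.2; set c := y.2 - x.2.
set L := dist3 x y.
have L0 : 0 <= L by exact: dist3_ge0.
have LL : L ^+ 2 = a ^+ 2 + b ^+ 2 + c ^+ 2.
  rewrite /L /dist3 sqr_sqrtr; last by rewrite !addr_ge0 // sqr_ge0.
  rewrite /a /b /c; ring.
have segx t : sub3 (seg x y t) x = ((t * a, t * b), t * c).
  by rewrite /sub3 /seg /a /b /c /=; congr ((_, _), _); ring.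
have [cL|cL] := eqVneq c L.
  have ha : a = 0 by apply/eqP; rewrite -sqrf_eq0; apply/eqP; nra.
  have hb : b = 0 by apply/eqP; rewrite -sqrf_eq0; apply/eqP; nra.
  exists (fun z => sub3 z x), (fun q => add3 q x); split.
  - by move=> p q; rewrite sub3_dist.
  - by move=> q; rewrite sub3_add3.
  - by move=> q; rewrite add3_sub3.
  - by move=> t; rewrite segx ha hb cL !mulr0.
set u : R3 R := ((a, b), c - L).
have n0 : u.1.1 ^+ 2 + u.1.2 ^+ 2 + u.2 ^+ 2 != 0.
  rewrite /u /=; apply/negP => /eqP h.
  have : (c - L) ^+ 2 = 0 by have := sqr_ge0 a; have := sqr_ge0 b;
    have := sqr_ge0 (c - L); lra.
  by move/eqP; rewrite sqrf_eq0 subr_eq0 (negbTE cL).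
exists (fun z => hh u (sub3 z x)), (fun q => add3 (hh u q) x); split.
- by move=> p q; rewrite hh_dist // sub3_dist.
- by move=> q; rewrite sub3_add3 hhK.
- by move=> w; rewrite hhK // add3_sub3.
- move=> t; rewrite segx /hh /u /=.
  set den := a ^+ 2 + b ^+ 2 + (c - L) ^+ 2.
  have den0 : den != 0 by exact: n0.
  have -> : 2 * (t * a * a + t * b * b + t * c * (c - L)) / den = t.
    apply/eqP; rewrite -[X in _ == X](divr1 t) eqr_div ?oner_neq0 // mulr1; apply/eqP.
    rewrite /den; have -> : t * (a ^+ 2 + b ^+ 2 + (c - L) ^+ 2) =
      t * (2 * (a ^+ 2 + b ^+ 2 + c ^+ 2) - 2 * c * L) - t * (a ^+ 2 + b ^+ 2 + c ^+ 2 - L ^+ 2) by ring.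
    rewrite LL; ring.
  by congr ((_, _), _); ring.
Qed.

End Iso.

Section Tube.
Variable R : realType.
Implicit Types p q r : R3 R.

Lemma inf_eq_of (S1 S2 : set R) : S2 `<=` S1 ->
  (forall x, S1 x -> exists2 y, S2 y & y <= x) ->
  (forall x, S1 x -> 0 <= x) -> inf S1 = inf S2.
Proof.
move=> s21 h h0.
have lb1 : has_lbound S1 by exists 0 => x /h0.
have lb2 : has_lbound S2 by exists 0 => x /s21 /h0.
have [[y0 Sy0]|n2] := pselect (S2 !=set0); last first.
  have e2 : S2 = set0 by apply/seteqP; split => // y Sy; apply: n2; exists y.
  have e1 : S1 = set0.
    by apply/seteqP; split => // x /h [y Sy _]; apply: n2; exists y.
  by rewrite e1 e2.
apply/le_anti/andP; split.
  apply: lb_le_inf; first by exists y0.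
  by move=> y /s21 Sy; exact: ge_inf.
apply: lb_le_inf; first by exists y0; exact: s21.
move=> x /h [y Sy yx]; apply: le_trans yx; exact: ge_inf.
Qed.

Definition pi3 (z : C2 R) : R3 R := ((z.1.1, z.1.2), z.2.1).

Lemma bdist_semitube (E : set (R3 R)) z : bdist (semitube E) z = dR E (pi3 z).
Proof.
rewrite /bdist /dR; apply: inf_eq_of.
- move=> _ [q nq <-]; exists (((q.1.1, q.1.2), (q.2, z.2.2))).
    by rewrite /semitube /=; move: nq; case: q => [[? ?] ?].
  by rewrite /dist4 /dist3 /pi3 /= subrr expr0n /= addr0.
- move=> _ [w nw <-]; exists (dist3 (pi3 z) (pi3 w)); first by exists (pi3 w).
  rewrite /dist4 /dist3 /pi3 /=; apply: ler_wsqrtr.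
  by rewrite lerDl sqr_ge0.
- by move=> _ [w _ <-]; exact: sqrtr_ge0.
Qed.

Lemma dR_iso D (A B : R3 R -> R3 R) p : isometry3 A ->
  (forall q, A (B q) = q) -> (forall w, B (A w) = w) ->
  dR (A @` D) (A p) = dR D p.
Proof.
move=> iA AB BA; rewrite /dR; congr inf; apply/seteqP; split.
- move=> _ [q nq <-]; exists (B q).
    by move=> Dq; apply: nq; exists (B q).
  by rewrite -iA AB.
- move=> _ [q nq <-]; exists (A q).
    by move=> [w Dw] /(congr1 B); rewrite !BA => ewq; apply: nq; rewrite -ewq.
  by rewrite iA.
Qed.

End Tube.

Section Mean.
Variable R : realType.
Local Notation mu := (@lebesgue_measure R).

Lemma cont_integrable (F : R -> R) (a b : R) : continuous F ->
  mu.-integrable `[a, b] (EFin \o F).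
Proof.
move=> cF; apply: continuous_compact_integrable; first exact: segment_compact.
exact: continuous_subspaceT.
Qed.

Lemma mu_itv (a b : R) : a <= b -> mu `[a, b] = (b - a)%:E.
Proof.
move=> ab; rewrite lebesgue_measure_itv /=.
rewrite lte_fin; case: ltgtP ab => //.
by move=> -> _; rewrite subrr.
Qed.

Lemma mean_contra (F : R -> R) (K : R) :
  continuous F -> (forall t, F t <= K) ->
  (forall t : R, 0 <= t <= pi / 4 -> F t < K) ->
  ((K%:E <= ((2 * pi)^-1)%:E *
     \int[mu]_(t in `[0%R, (2 * pi)%R]) (F t)%:E)%E) -> False.
Proof.
move=> cF FK Flt hI.
have pi0 : 0 < pi :> R := pi_gt0 R.
have [c cin cmax] := @EVT_max R F 0 (pi / 4) (ltW (divr_gt0 pi0 (ltr0n _ 4)))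
  (continuous_subspaceT cF).
have cin' : 0 <= c <= pi / 4 by move: cin; rewrite in_itv.
set e := K - F c.
have e0 : 0 < e by have := Flt _ cin'; rewrite /e; lra.
set G := fun t => K - F t.
have cG : continuous G.
  move=> t; apply: cvgB; [exact: cvg_cst | exact: cF].
have G0 t : 0 <= G t by have := FK t; rewrite /G; lra.
have iG := cont_integrable 0 (2 * pi) cG.
have iK : mu.-integrable `[0, 2 * pi] (EFin \o (fun=> K)).
  by apply: cont_integrable => t; exact: cvg_cst.
have mI : measurable (`[0, 2 * pi] : set R) by exact: measurable_itv.
have mI4 : measurable (`[0, pi / 4] : set R) by exact: measurable_itv.
have eqI : (\int[mu]_(t in `[0%R, (2 * pi)%R]) (F t)%:E =
    \int[mu]_(t in `[0%R, (2 * pi)%R]) (K%:E - (G t)%:E))%E.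
  by apply: eq_integral => t _; rewrite /G -EFinB; congr EFin; ring.
rewrite eqI integralB_EFin // integral_cst // in hI.
have mm := mu_itv (ltW (mulr_gt0 (ltr0n _ 2) pi0)).
rewrite subr0 in mm.
move: hI; set m := (X in (K%:E * X)%E); have -> : m = (2 * pi)%:E by exact: mm.
move=> hI.
have mG := measurable_int _ iG.
have sub4 : (`[0, pi / 4] : set R) `<=` `[0, 2 * pi].
  move=> t /=; rewrite !in_itv /= => /andP [t0 t1]; rewrite t0 /=.
  apply: (le_trans t1); rewrite ler_pdivrMr //; nra.
have low : ((e * (pi / 4))%:E <= \int[mu]_(x in `[0%R, (2 * pi)%R]) (G x)%:E)%E.
  apply: (@le_trans _ _ (\int[mu]_(x in `[0%R, (pi / 4)%R]) (G x)%:E)%E).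
    have mm4 := mu_itv (divr_ge0 (ltW pi0) (ler0n _ 4)).
    rewrite subr0 in mm4.
    have -> : ((e * (pi / 4))%:E = \int[mu]_(x in `[0%R, (pi / 4)%R]) (cst e%:E x))%E.
      by rewrite integral_cst // EFinM; congr (_ * _)%E; symmetry; exact: mm4.
    apply: ge0_le_integral => //.
    - by move=> t _ /=; rewrite lee_fin ltW.
    - exact: (measurable_funS mI sub4 mG).
    - move=> t /=; rewrite in_itv /= => tI; rewrite lee_fin /e /G.
      by have := cmax t; rewrite in_itv /= tI => /(_ isT) h; lra.
  apply: ge0_subset_integral => //.
  by move=> t _ /=; rewrite lee_fin.
have Ifin : (\int[mu]_(x in `[0%R, (2 * pi)%R]) (G x)%:E)%E \is a fin_num
  := @integrable_fin_num _ _ R mu _ mI _ iG.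
set I := (\int[mu]_(x in `[0%R, (2 * pi)%R]) (G x)%:E)%E in Ifin low.
move: low hI; rewrite -(fineK Ifin) => low.
rewrite [X in (_ - X)%E](_ : _ = (fine I)%:E); last by rewrite fineK.
move=> hI.
rewrite -EFinM in hI; simpl in hI; rewrite lee_fin in hI low.
have : K <= (2 * pi)^-1 * (K * (2 * pi) - (e * (pi / 4))).
  apply: (le_trans hI); rewrite ler_pM2l ?invr_gt0 ?mulr_gt0 //.
  by rewrite lerD2l lerN2.
have e1 : forall p : R, 0 < p ->
    (2 * p)^-1 * (K * (2 * p) - e * (p / 4)) = K - e / 8.
  by move=> p p0; field; rewrite gt_eqF.
rewrite e1 //; lra.
Qed.

End Mean.

Section Key.
Variable R : realType.
Implicit Types p q r x y : R3 R.

Lemma lip_cont (f : R -> R) (K : R) : 0 < K ->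
  (forall a b, `|f a - f b| <= K * `|a - b|) -> continuous f.
Proof.
move=> K0 hf x; apply/cvgrPdist_lt => e e0.
apply/nbhs_ballP; exists (e / K); first by rewrite /= divr_gt0.
move=> t; rewrite /ball /= => xt.
apply: (le_lt_trans (hf x t)).
have -> : e = K * (e / K) by rewrite mulrC divfK // gt_eqF.
by rewrite ltr_pM2l.
Qed.

Lemma seg0 x y : seg x y 0 = x.
Proof. by case: x => [[? ?] ?]; rewrite /seg /=; congr ((_, _), _); ring. Qed.

Lemma seg1 x y : seg x y 1 = y.
Proof. by case: y => [[? ?] ?]; rewrite /seg /=; congr ((_, _), _); ring. Qed.

Lemma seg_dist x y s t : dist3 (seg x y s) (seg x y t) = `|s - t| * dist3 x y.
Proof.
rewrite /dist3 /seg /= -sqrtr_sqr -sqrtrM ?sqr_ge0 //; congr Num.sqrt; ring.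
Qed.

Lemma dR_seg_lip D x y a b :
  `|dR D (seg x y a) - dR D (seg x y b)| <= (dist3 x y + 1) * `|a - b|.
Proof.
have h1 := dR_lip D (seg x y a) (seg x y b).
have h2 := dR_lip D (seg x y b) (seg x y a).
rewrite seg_dist in h2; rewrite seg_dist in h1.
rewrite distrC in h2.
have := normr_ge0 (a - b); have := mulr_ge0 (normr_ge0 (a - b)) (dist3_ge0 x y).
rewrite ler_norml mulrDl mul1r (mulrC (dist3 x y)) => *; apply/andP; split; lra.
Qed.

Lemma dR_seg_cont D x y : continuous (fun s => dR D (seg x y s)).
Proof.
apply: (lip_cont (K := dist3 x y + 1)); last exact: dR_seg_lip.
by have := dist3_ge0 x y; lra.
Qed.


Lemma key (D : set (R3 R)) (oD : open D) (ex : exists q, ~ D q)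
  (hyp : forall A, isometry3 A -> pseudoconvex (semitube (A @` D)))
  x y (Dseg : forall t : R, 0 <= t <= 1 -> D (seg x y t)) (t : R)
  (t01 : 0 <= t <= 1) :
  Num.min (dR D x) (dR D y) <= dR D (seg x y t).
Proof.
rewrite leNgt; apply/negP => lt.
set g := fun s => dR D (seg x y s).
have cg : continuous g := @dR_seg_cont D x y.
have gpos s : 0 <= s <= 1 -> 0 < g s by move=> hs; exact: dR_gt0 oD (Dseg s hs) ex.
have [t0 t0in t0min] := @EVT_min R g 0 1 ler01 (continuous_subspaceT cg).
set c := g t0.
have t0' : 0 <= t0 <= 1 by move: t0in; rewrite in_itv.
have cmin s : 0 <= s <= 1 -> c <= g s by move=> hs; apply: t0min; rewrite in_itv.
have c0 : 0 < c by exact: gpos.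
have cm : c < Num.min (dR D x) (dR D y) := le_lt_trans (cmin t t01) lt.
have gx : g 0 = dR D x by rewrite /g seg0.
have gy : g 1 = dR D y by rewrite /g seg1.
have [cx cy] : c < g 0 /\ c < g 1.
  by move: cm; rewrite gx gy lt_min => /andP[].
set M := [set s | 0 <= s <= 1 /\ g s <= c].
have Mt0 : M t0 by split.
have ubM : ubound M 1 by move=> s [/andP [_ ?] _].
have hsM : has_sup M by split; [exists t0 | exists 1].
set t1 := sup M.
have t1le : t1 <= 1 by apply: ge_sup => //; exists t0.
have t0t1 : t0 <= t1 by exact: sup_upper_bound.
have t1ge : 0 <= t1 by move: t0' => /andP [? ?]; lra.
set K := dist3 x y + 1.
have K0 : 0 < K by rewrite /K; have := dist3_ge0 x y; lra.
have gt1 : g t1 <= c.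
  rewrite leNgt; apply/negP => h.
  have dpos : 0 < (g t1 - c) / K by rewrite divr_gt0 // subr_gt0.
  have [s Ms ss] := sup_adherent dpos hsM.
  have st1 : s <= t1 by exact: sup_upper_bound.
  have := @dR_seg_lip D x y t1 s; rewrite -/K -/(g t1) -/(g s) => hl.
  move: Ms => [_ gs].
  have e1 : `|t1 - s| = t1 - s by rewrite ger0_norm // subr_ge0.
  rewrite e1 in hl.
  have : K * (t1 - s) < g t1 - c.
    by rewrite -ltr_pdivlMl // mulrC; rewrite -/t1 in ss; lra.
  move: hl; rewrite ler_norml => /andP [_ hl2]; lra.
have gt1c : g t1 = c by apply/le_anti; rewrite gt1 cmin // t1ge t1le.
have right s : t1 < s -> s <= 1 -> c < g s.
  move=> h1 h2; rewrite ltNge; apply/negP => hs.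
  have Ms : M s by split => //; apply/andP; split => //; lra.
  have := sup_upper_bound hsM Ms; rewrite -/t1; lra.
have t1pos : 0 < t1.
  rewrite lt_neqAle t1ge andbT; apply/negP => /eqP e0.
  by move: cx; rewrite e0 gt1c ltxx.
have t1lt1 : t1 < 1.
  rewrite lt_neqAle t1le andbT; apply/negP => /eqP e1.
  by move: cy; rewrite -e1 gt1c ltxx.
set rho := Num.min t1 (1 - t1).
have rho0 : 0 < rho by rewrite lt_min t1pos subr_gt0.
have rho1 : rho <= t1 by rewrite ge_min lexx.
have rho2 : rho <= 1 - t1 by rewrite ge_min lexx orbT.
have inI z : -1 <= z <= 1 -> 0 <= t1 + rho * z <= 1.
  by move=> /andP [z1 z2]; apply/andP; split; nra.
have [A [B [iA AB BA Aseg]]] := iso_exists x y.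
set L := dist3 x y.
have [oOm [Om1|psh]] := hyp A iA.
  move: ex => [q nq]; apply: nq.
  have : semitube (A @` D) (((A q).1.1, (A q).1.2), ((A q).2, 0)) by rewrite Om1.
  rewrite /semitube /= => -[w Dw Aw].
  have -> : q = w; last by [].
  rewrite -(BA w) -(BA q); congr B; rewrite Aw; by case: (A q) => [[? ?] ?].
set Om := semitube (A @` D).
have bd z s : pi3 z = A (seg x y s) -> bdist Om z = g s.
  by move=> e; rewrite bdist_semitube e (@dR_iso R D A B _ iA AB BA).
set a : C2 R := ((0, 0), (t1 * L, 0)).
set b : C2 R := ((0, 0), (rho * L, 0)).
have pcl zeta : pi3 (cline a b zeta) = A (seg x y (t1 + rho * zeta.1)).
  by rewrite Aseg /pi3 /cline /=; congr ((_, _), _); rewrite -/L; ring.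
have pci th : pi3 (circ a b th) = A (seg x y (t1 + rho * cos th)).
  by rewrite Aseg /pi3 /circ /rotC /=; congr ((_, _), _); rewrite -/L; ring.
have pa : pi3 a = A (seg x y t1) by rewrite Aseg.
have disc zeta : zeta.1 ^+ 2 + zeta.2 ^+ 2 <= 1 -> Om (cline a b zeta).
  move=> hz; rewrite /Om /semitube /=.
  change ((A @` D) (pi3 (cline a b zeta))); rewrite pcl.
  exists (seg x y (t1 + rho * zeta.1)) => //; apply: Dseg; apply: inI.
  move: hz; have := sqr_ge0 zeta.2 => h0 hz; have h2 : zeta.1 ^+ 2 <= 1 by lra.
  by apply/andP; split; nra.
have := psh.2 a b disc.
rewrite (bd a t1 pa) gt1c.
move=> hI.
have eqI : (\int[lebesgue_measure]_(t2 in `[0%R, (2 * pi)%R])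
      (- ln (bdist Om (circ a b t2)))%:E =
    \int[lebesgue_measure]_(t2 in `[0%R, (2 * pi)%R])
      (- ln (g (t1 + rho * cos t2)))%:E)%E.
  by apply: eq_integral => th _; rewrite (bd _ _ (pci th)).
rewrite eqI in hI.
apply: (@mean_contra R (fun th => - ln (g (t1 + rho * cos th))) (- ln c) _ _ _ hI).
- move=> th.
  have hin : {for th, continuous (fun th => t1 + rho * cos th)}.
    apply: cvgD; first exact: cvg_cst.
    apply: cvgM; first exact: cvg_cst.
    exact: continuous_cos.
  have hg := continuous_comp hin (cg _).
  have hp : 0 < g (t1 + rho * cos th).
    by apply: gpos; apply: inI; rewrite cos_geN1 cos_le1.
  exact: (cvgN (continuous_comp hg (continuous_ln hp))).
- move=> th; rewrite lerN2 ler_ln ?posrE //; last first.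
    by apply: gpos; apply: inI; rewrite cos_geN1 cos_le1.
  by apply: cmin; apply: inI; rewrite cos_geN1 cos_le1.
- move=> th /andP [th0 th1]; rewrite ltrN2 ltr_ln ?posrE //; last first.
    by apply: gpos; apply: inI; rewrite cos_geN1 cos_le1.
  have pi0 : 0 < pi :> R := pi_gt0 R.
  have cp : 0 < cos th by apply: cos_gt0_pihalf; apply/andP; split; lra.
  apply: right; first by rewrite ltrDl mulr_gt0.
  by have := inI (cos th); rewrite cos_geN1 cos_le1 => /(_ isT) /andP [].

Qed.
End Key.

Lemma segxx (R : realType) (x : R3 R) t : seg x x t = x.
Proof. by case: x => [[? ?] ?]; rewrite /seg /=; congr ((_, _), _); ring. Qed.

Lemma seg_dist2 (R : realType) (x y z : R3 R) t : 0 <= t <= 1 ->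
  dist3 (seg x y t) (seg x z t) <= dist3 y z.
Proof.
move=> /andP [t0 t1].
rewrite /dist3 /seg /=; apply: ler_wsqrtr.
set S := (y.1.1 - z.1.1) ^+ 2 + (y.1.2 - z.1.2) ^+ 2 + (y.2 - z.2) ^+ 2.
have -> : ((1 - t) * x.1.1 + t * y.1.1 - ((1 - t) * x.1.1 + t * z.1.1)) ^+ 2 +
  ((1 - t) * x.1.2 + t * y.1.2 - ((1 - t) * x.1.2 + t * z.1.2)) ^+ 2 +
  ((1 - t) * x.2 + t * y.2 - ((1 - t) * x.2 + t * z.2)) ^+ 2 = t ^+ 2 * S.
  by rewrite /S; ring.
have S0 : 0 <= S by rewrite /S !addr_ge0 // sqr_ge0.
have : t ^+ 2 <= 1 by nra.
nra.
Qed.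

Theorem theorem1p1 (R : realType) (D : set (R3 R)) :
  domain3 D ->
  (forall A : R3 R -> R3 R, isometry3 A -> pseudoconvex (semitube (A @` D))) ->
  convex3 D.
Proof.
move=> [[x0 Dx0] [oD cD]] hyp.
have [ex|nex] := pselect (exists q, ~ D q); last first.
  move=> p q _ _ t _; apply: contrapT => n; apply: nex; by eexists; exact: n.
suff claim : forall x, D x -> forall y, D y ->
    forall t : R, 0 <= t <= 1 -> D (seg x y t).
  by move=> p q Dp Dq t ht; exact: (claim p Dp q Dq t ht).
move=> x Dx.
set d := dR D.
have dpos z : D z -> 0 < d z by move=> Dz; exact: dR_gt0 oD Dz ex.
set S := [set y | D y /\ forall t : R, 0 <= t <= 1 -> D (seg x y t)].
have SD : S = D.
  apply: cD.
  - by exists x; split => // t _; rewrite segxx.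
  - exists [set z | exists2 y, S y & dist3 y z < Num.min (d x) (d y)].
      rewrite openE => z [y Sy hz]; apply/nbhs3P.
      exists (Num.min (d x) (d y) - dist3 y z); first by rewrite subr_gt0.
      move=> w hw; exists y => //; have := dist3_tri y z w; lra.
    apply/seteqP; split.
      move=> y [Dy Sy]; split => //; exists y => //.
      by rewrite dist3xx lt_min !dpos.
    move=> z [Dz [y [Dy Sy] hyz]]; split => // t ht.
    apply: (@dR_in _ D (seg x y t)).
    have := key oD ex hyp Sy ht; move=> hk.
    have := seg_dist2 x y z ht; rewrite -/d; lra.
  - exists (closure S); first exact: closed_closure.
    apply/seteqP; split.
      by move=> y Sy; split; [case: Sy | exact: subset_closure].
    move=> y [Dy cly]; split => // t ht.
    set m := Num.min (d x) (d y).
    have m0 : 0 < m by rewrite lt_min !dpos.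
    have : nbhs y [set w | dist3 y w < m / 2].
      by apply/nbhs3P; exists (m / 2) => //; rewrite divr_gt0.
    move=> /cly [y' [[Dy' Sy'] hy']].
    have := key oD ex hyp Sy' ht; rewrite -/d => hk.
    have hl := dR_lip D y y'; rewrite -/d in hl.
    have hd := seg_dist2 x y' y ht; rewrite dist3C in hd.
    rewrite /= in hy'; rewrite (dist3C y' y) in hd.
    apply: (@dR_in _ D (seg x y' t)); rewrite -/d.
    have mx : m <= d x by rewrite ge_min lexx.
    have my : m <= d y by rewrite ge_min lexx orbT.
    have : m / 2 < Num.min (d x) (d y').
      by rewrite lt_min; apply/andP; split; lra.
    rewrite dist3C; lra.
move=> y Dy; rewrite -SD in Dy; by case: Dy.
Qed.
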